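(* Let $\mathcal{H}_S$ (system) and $\mathcal{H}_B$ (bath) be Hilbert spaces (with all traces below finite, e.g. finite-dimensional). Let $H_S(s)$, $s\in[0,t]$, be a (possibly time-dependent) self-adjoint system Hamiltonian, $H_B$ a time-independent self-adjoint bath Hamiltonian, and $U_t$ any unitary on $\mathcal{H}_S\otimes\mathcal{H}_B$ (the evolution generated by $H_{\rm tot}(s)=H_S(s)\otimes\mathbb{1}_B+\mathbb{1}_S\otimes H_B+V(s)$ with an arbitrary interaction $V$). Fix $\beta>0$ and set $Z_S(s)={\rm Tr}[e^{-\beta H_S(s)}]$, $\tau_S(s)=e^{-\beta H_S(s)}/Z_S(s)$, $Z_B={\rm Tr}[e^{-\beta H_B}]$, $\tau_B=e^{-\beta H_B}/Z_B$, and $F_S(s)=-\beta^{-1}\ln Z_S(s)$, $\Delta F_S=F_S(t)-F_S(0)$. Let $\{|\epsilon\rangle\}$ be an orthonormal eigenbasis of $H_S(0)$, with $|\epsilon\rangle$ having eigenvalue $\epsilon$ (sums over $\epsilon$ run over this basis). Define the CPTP map $\Phi_t(\rho)={\rm Tr}_B[U_t(\rho\otimes\tau_B)U_t^\dagger]$, the trajectory energy change $\Delta\tilde E(\epsilon)={\rm Tr}[H_S(t)\Phi_t(|\epsilon\rangle\langle\epsilon|)]-\epsilon$, $\tilde Z_S(t)=\sum_\epsilon e^{-\beta{\rm Tr}[H_S(t)\Phi_t(|\epsilon\rangle\langle\epsilon|)]}$, the guessed state $$\Theta_{SB}(t)=\sum_\epsilon \frac{e^{-\beta{\rm Tr}[H_S(t)\Phi_t(|\epsilon\rangle\langle\epsilon|)]}}{\tilde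 Z_S(t)}\,U_t(|\epsilon\rangle\langle\epsilon|\otimes\tau_B)U_t^\dagger,$$ the guessed quantum heat $\langle\tilde Q\rangle_B={\rm Tr}[H_B\tau_B]-{\rm Tr}[(\mathbb{1}_S\otimes H_B)\Theta_{SB}(t)]$, and for each $\epsilon$ the guessed quantum work $\tilde W(\epsilon)=\Delta\tilde E(\epsilon)-\langle\tilde Q\rangle_B$. Writing $\langle f\rangle_{\tilde P}=\sum_\epsilon \frac{e^{-\beta\epsilon}}{Z_S(0)} f(\epsilon)$, one has $$\langle e^{-\beta\tilde W}\rangle_{\tilde P}=e^{-\beta\Delta F_S}\,e^{-D[\Theta_{SB}(t)\|\tau_S(t)\otimes\tau_B]},$$ where $D[\rho\|\sigma]={\rm Tr}[\rho\ln\rho]-{\rm Tr}[\rho\ln\sigma]$ is the quantum relative entropy.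
   Context: Physical interpretation: the system starts in $\tau_S(0)$ and the bath in $\tau_B$; an initial projective energy measurement of the system yields $\epsilon$ with probability $e^{-\beta\epsilon}/Z_S(0)$, after which the joint state $|\epsilon\rangle\langle\epsilon|\otimes\tau_B$ evolves under $U_t$. The average $\langle\cdot\rangle_{\tilde P}$ is with respect to the distribution $\tilde P(\Delta E)=\sum_\epsilon \frac{e^{-\beta\epsilon}}{Z_S(0)}\delta(\Delta E-\Delta\tilde E(\epsilon))$. The quantity $\langle\tilde Q\rangle_B$ is a constant (independent of $\epsilon$). *)

(* Defs.v *)
From HB Require Import structures.
From mathcomp Require Import all_boot all_order all_algebra.
From mathcomp Require Import complex mxtens.
From mathcomp Require Import all_classical all_reals.
From mathcomp Require Import all_analysis.
Set Implicit Arguments. Unset Strict Implicit. Unset Printing Implicit Defensive.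
Import Order.TTheory GRing.Theory Num.Theory Num.Def ComplexField.
Local Open Scope ring_scope.
Local Open Scope complex_scope.

Section QDefs.
Variable R : realType.
Local Notation C := R[i].

Definition adjmx p q (A : 'M[C]_(p, q)) : 'M[C]_(q, p) := map_mx conjC A^T.

(* Functional calculus for a Hermitian (normal) matrix A = P^-1 diag(d) P with
   P unitary (the spectral decomposition of mathcomp's spectral.v):
   f(A) := P^-1 diag(f(d)) P.  The eigenvalues of a Hermitian matrix are real,
   so f is applied to their real parts. *)
Definition funm (f : R -> R) n (A : 'M[C]_n) : 'M[C]_n :=
  invmx (spectralmx A) *m
  diag_mx (map_mx (fun z : C => (f (complex.Re z))%:C) (spectral_diag A)) *m
  spectralmx A.

Definition mexp n (A : 'M[C]_n) : 'M[C]_n := funm expR A.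
Definition mln n (A : 'M[C]_n) : 'M[C]_n := funm (@ln R) A.

(* Real part of the trace (all traces below are traces of products of
   Hermitian matrices and hence real). *)
Definition trR n (A : 'M[C]_n) : R := complex.Re (\tr A).

Definition ptrB n m (X : 'M[C]_(n * m)) : 'M[C]_n :=
  \matrix_(i, j) \sum_(k < m) X (mxtens_index (i, k)) (mxtens_index (j, k)).

Definition partZ (beta : R) n (H : 'M[C]_n) : R := trR (mexp ((- beta)%:C *: H)).
Definition gibbs (beta : R) n (H : 'M[C]_n) : 'M[C]_n :=
  ((partZ beta H)^-1)%:C *: mexp ((- beta)%:C *: H).

Definition freeEnergy (beta : R) n (H : 'M[C]_n) : R := - beta^-1 * @ln R (partZ beta H).

Definition relent n (rho sigma : 'M[C]_n) : R :=
  trR (rho *m mln rho) - trR (rho *m mln sigma).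

Definition Phi (beta : R) n m (HB : 'M[C]_m) (U : 'M[C]_(n * m)) (rho : 'M[C]_n)
  : 'M[C]_n := ptrB (U *m (rho *t gibbs beta HB) *m adjmx U).

Definition ketbra n (e : 'cV[C]_n) : 'M[C]_n := e *m adjmx e.

Definition Efin (beta : R) n m (Ht : 'M[C]_n) (HB : 'M[C]_m) (U : 'M[C]_(n * m))
  (e : 'I_n -> 'cV[C]_n) (i : 'I_n) : R :=
  trR (Ht *m Phi beta HB U (ketbra (e i))).

Definition Ztil (beta : R) n m (Ht : 'M[C]_n) (HB : 'M[C]_m) (U : 'M[C]_(n * m))
  (e : 'I_n -> 'cV[C]_n) : R :=
  \sum_(i < n) expR (- beta * Efin beta Ht HB U e i).

Definition Theta (beta : R) n m (Ht : 'M[C]_n) (HB : 'M[C]_m) (U : 'M[C]_(n * m))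
  (e : 'I_n -> 'cV[C]_n) : 'M[C]_(n * m) :=
  \sum_(i < n) (expR (- beta * Efin beta Ht HB U e i) / Ztil beta Ht HB U e)%:C *:
     (U *m (ketbra (e i) *t gibbs beta HB) *m adjmx U).

Definition Qtil (beta : R) n m (Ht : 'M[C]_n) (HB : 'M[C]_m) (U : 'M[C]_(n * m))
  (e : 'I_n -> 'cV[C]_n) : R :=
  trR (HB *m gibbs beta HB) - trR ((1%:M *t HB) *m Theta beta Ht HB U e).

Definition dEtil (beta : R) n m (Ht : 'M[C]_n) (HB : 'M[C]_m) (U : 'M[C]_(n * m))
  (e : 'I_n -> 'cV[C]_n) (eps : 'I_n -> R) (i : 'I_n) : R :=
  Efin beta Ht HB U e i - eps i.
Definition Wtil (beta : R) n m (Ht : 'M[C]_n) (HB : 'M[C]_m) (U : 'M[C]_(n * m))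
  (e : 'I_n -> 'cV[C]_n) (eps : 'I_n -> R) (i : 'I_n) : R :=
  dEtil beta Ht HB U e eps i - Qtil beta Ht HB U e.

End QDefs.

(* Main.v *)
Require Import Defs.
From HB Require Import structures.
From mathcomp Require Import all_boot all_order all_algebra.
From mathcomp Require Import complex mxtens.
From mathcomp Require Import all_classical all_reals all_analysis.
From mathcomp Require Import ring lra.
Import Order.TTheory GRing.Theory Num.Theory Num.Def ComplexField.
Local Open Scope ring_scope.
Local Open Scope complex_scope.
Set Implicit Arguments. Unset Strict Implicit.


Section Aux.
Variable R : realType.
Local Notation C := R[i].

Lemma unitary_adjK n (P : 'M[C]_n) : P \is unitarymx -> adjmx P *m P = 1%:M.
Proof.
move=> PU; have := mulmxKtV (1%:M : 'M[C]_n) PU erefl.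
by rewrite mul1mx.
Qed.

Lemma unitary_Kadj n (P : 'M[C]_n) : P \is unitarymx -> P *m adjmx P = 1%:M.
Proof. by move/unitarymxP. Qed.

Lemma conj_uniq (F : fieldType) n (g : F -> F) (A P V : 'M[F]_n) (s d : 'rV[F]_n) :
  P \in unitmx -> V \in unitmx -> A = invmx P *m diag_mx s *m P ->
  A = invmx V *m diag_mx d *m V ->
  invmx P *m diag_mx (map_mx g s) *m P = invmx V *m diag_mx (map_mx g d) *m V.
Proof.
move=> Pu Vu hP hA.
have TV : (P *m invmx V) *m V = P by rewrite mulmxKV.
have PT : invmx P *m (P *m invmx V) = invmx V by rewrite mulmxA mulVmx // mul1mx.
have hT : diag_mx s *m (P *m invmx V) = (P *m invmx V) *m diag_mx d.
  have e1 : P *m A = diag_mx s *m P by rewrite {1}hP !mulmxA mulmxV // mul1mx.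
  have e2 : A *m invmx V = invmx V *m diag_mx d.
    by rewrite {1}hA -!mulmxA mulmxV // mulmx1.
  by rewrite mulmxA -e1 -(mulmxA P A) e2 !mulmxA.
move: TV PT hT; set T := P *m invmx V; clearbody T => TV PT hT.
have hT2 : diag_mx (map_mx g s) *m T = T *m diag_mx (map_mx g d).
  apply/matrixP => i j; move/matrixP: hT => /(_ i j).
  rewrite !mul_diag_mx !mul_mx_diag !mxE => hij.
  have [->|nz] := eqVneq (T i j) 0; first by rewrite mulr0 mul0r.
  suff -> : s 0 i = d 0 j by rewrite mulrC.
  apply/eqP; rewrite -subr_eq0; apply/eqP.
  by apply: (mulIf nz); rewrite mul0r mulrBl hij [T i j * _]mulrC subrr.
by rewrite -{2}TV mulmxA -(mulmxA _ _ T) hT2 mulmxA PT.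
Qed.

Lemma funm_uniq n (f : R -> R) (A V : 'M[C]_n) (d : 'rV[C]_n) :
  V \is unitarymx -> A = invmx V *m diag_mx d *m V ->
  funm f A = invmx V *m diag_mx (map_mx (fun z : C => (f (complex.Re z))%:C) d) *m V.
Proof.
move=> VU hA.
have An : A \is normalmx by apply/orthomx_spectral_subproof; exists (V, d).
have hP : A = invmx (spectralmx A) *m diag_mx (spectral_diag A) *m spectralmx A.
  by move/orthomx_spectralP: An.
have Pu : spectralmx A \in unitmx by exact: spectral_unit.
have Vu : V \in unitmx by move: VU; exact: unitarymx_unit.
exact: (conj_uniq _ Pu Vu hP hA).
Qed.

Definition dgR n (a : 'I_n -> R) : 'M[C]_n := diag_mx (\row_i (a i)%:C).

Lemma funm_SF n f (A P : 'M[C]_n) (a : 'I_n -> R) : P \is unitarymx ->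
  A = adjmx P *m dgR a *m P -> funm f A = adjmx P *m dgR (fun i => f (a i)) *m P.
Proof.
move=> PU hA; have hI : invmx P = adjmx P by exact: invmx_unitary.
have hA' : A = invmx P *m diag_mx (\row_i (a i)%:C) *m P by rewrite hI.
rewrite (funm_uniq f PU hA') hI.
by congr (_ *m diag_mx _ *m _); apply/rowP => i; rewrite !mxE.
Qed.

Lemma adjmx_mul p q r (A : 'M[C]_(p, q)) (B : 'M[C]_(q, r)) :
  adjmx (A *m B) = adjmx B *m adjmx A.
Proof. by rewrite /adjmx trmx_mul map_mxM. Qed.

Lemma adjmxK p q (A : 'M[C]_(p, q)) : adjmx (adjmx A) = A.
Proof. exact: trmxCK. Qed.

Lemma adjmx1 p : adjmx (1%:M : 'M[C]_p) = 1%:M.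
Proof. by rewrite /adjmx trmx1 map_mx1. Qed.

Lemma adj_unitary p (P : 'M[C]_p) : P \is unitarymx -> adjmx P \is unitarymx.
Proof. by rewrite -trmxC_unitary. Qed.

Lemma unitary1 p : (1%:M : 'M[C]_p) \is unitarymx.
Proof. by apply/unitarymxP; rewrite -/(adjmx _) adjmx1 mulmx1. Qed.

Lemma sum_tens n m (F : 'I_(n * m) -> C) :
  \sum_(k < n * m) F k = \sum_(i < n) \sum_(j < m) F (@mxtens_index _ _ (i, j)).
Proof.
rewrite pair_big /=.
rewrite (reindex (@mxtens_index n m)) /=; last first.
  by exists (@mxtens_unindex n m) => k _; rewrite (mxtens_indexK, mxtens_unindexK).
by apply: eq_bigr => -[i j].
Qed.

Lemma mxtrace_tens n m (A : 'M[C]_n) (B : 'M[C]_m) : \tr (A *t B) = \tr A * \tr B.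
Proof.
rewrite /mxtrace sum_tens mulr_suml; apply: eq_bigr => i _.
by rewrite mulr_sumr; apply: eq_bigr => j _; rewrite tensmxE.
Qed.

Lemma tensmxDl n m p q (A A' : 'M[C]_(n, m)) (B : 'M[C]_(p, q)) :
  (A + A') *t B = A *t B + A' *t B.
Proof. by apply/matrixP => k l; rewrite !mxE mulrDl. Qed.

Lemma tensmxDr n m p q (A : 'M[C]_(n, m)) (B B' : 'M[C]_(p, q)) :
  A *t (B + B') = A *t B + A *t B'.
Proof. by apply/matrixP => k l; rewrite !mxE mulrDr. Qed.

Lemma tensmxZl n m p q c (A : 'M[C]_(n, m)) (B : 'M[C]_(p, q)) :
  (c *: A) *t B = c *: (A *t B).
Proof. by apply/matrixP => k l; rewrite !mxE mulrA. Qed.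

Lemma tensmxZr n m p q c (A : 'M[C]_(n, m)) (B : 'M[C]_(p, q)) :
  A *t (c *: B) = c *: (A *t B).
Proof. by apply/matrixP => k l; rewrite !mxE mulrCA. Qed.

Lemma tensmxBl n m p q (A A' : 'M[C]_(n, m)) (B : 'M[C]_(p, q)) :
  (A - A') *t B = A *t B - A' *t B.
Proof. by apply/matrixP => k l; rewrite !mxE mulrBl. Qed.

Lemma tensmxBr n m p q (A : 'M[C]_(n, m)) (B B' : 'M[C]_(p, q)) :
  A *t (B - B') = A *t B - A *t B'.
Proof. by apply/matrixP => k l; rewrite !mxE mulrBr. Qed.

Lemma tensmx_suml I (r : seq I) (P : pred I) n m p q (F : I -> 'M[C]_(n, m))
  (B : 'M[C]_(p, q)) :
  (\sum_(i <- r | P i) F i) *t B = \sum_(i <- r | P i) (F i *t B).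
Proof.
elim/big_rec2: _ => [|i y1 y2 _ <-]; first by rewrite tens0mx.
by rewrite tensmxDl.
Qed.

Lemma idx_eq n m (i i' : 'I_n) (j j' : 'I_m) :
  (@mxtens_index _ _ (i, j) == @mxtens_index _ _ (i', j')) = (i == i') && (j == j').
Proof. by rewrite (inj_eq (can_inj (@mxtens_indexK n m))) xpair_eqE. Qed.

Lemma tens11 n m : (1%:M : 'M[C]_n) *t (1%:M : 'M[C]_m) = 1%:M.
Proof.
apply/matrixP => k l.
case: (mxtens_indexP k) => i j; case: (mxtens_indexP l) => i' j'.
rewrite tensmxE !mxE idx_eq.
by case: (i == i'); case: (j == j'); rewrite /= ?mulr1n ?mulr0n ?mulr1 ?mulr0.
Qed.

Lemma adjmx_tens n m p q (A : 'M[C]_(n, m)) (B : 'M[C]_(p, q)) :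
  adjmx (A *t B) = adjmx A *t adjmx B.
Proof. by apply/matrixP => k l; rewrite !mxE rmorphM. Qed.

Lemma tens_unitary n m (P : 'M[C]_n) (Q : 'M[C]_m) :
  P \is unitarymx -> Q \is unitarymx -> P *t Q \is unitarymx.
Proof.
move=> /unitarymxP PU /unitarymxP QU; apply/unitarymxP.
by rewrite -/(adjmx _) adjmx_tens tensmx_mul PU QU tens11.
Qed.

Lemma dgR_tens n m (a : 'I_n -> R) (b : 'I_m -> R) :
  dgR a *t dgR b = dgR (fun k => a (@mxtens_unindex _ _ k).1 * b (@mxtens_unindex _ _ k).2).
Proof.
apply/matrixP => k l.
case: (mxtens_indexP k) => i j; case: (mxtens_indexP l) => i' j'.
rewrite tensmxE !mxE !mxtens_indexK /= idx_eq.
have [->|ne] := eqVneq i i'; have [->|ne'] := eqVneq j j';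
  by rewrite /= ?mulr1n ?mulr0n ?mulr0 ?mul0r ?rmorphM.
Qed.

Lemma dgR_add_tens n m (a : 'I_n -> R) (b : 'I_m -> R) :
  dgR (fun k => a (@mxtens_unindex _ _ k).1 + b (@mxtens_unindex _ _ k).2)
  = dgR a *t 1%:M + 1%:M *t dgR b.
Proof.
apply/matrixP => k l.
case: (mxtens_indexP k) => i j; case: (mxtens_indexP l) => i' j'.
rewrite !mxE !mxtens_indexK /= idx_eq.
have [->|ne] := eqVneq i i'; have [->|ne'] := eqVneq j j';
  by rewrite /= ?mulr1n ?mulr0n ?mulr0 ?mul0r ?mulr1 ?mul1r ?addr0 ?add0r ?rmorphD.
Qed.

Lemma dgR_mul n (a b : 'I_n -> R) : dgR a *m dgR b = dgR (fun i => a i * b i).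
Proof.
by rewrite /dgR mulmx_diag; congr diag_mx; apply/rowP => i; rewrite !mxE rmorphM.
Qed.

Lemma mxtrace_dgR n (a : 'I_n -> R) : \tr (dgR a) = (\sum_i a i)%:C.
Proof.
rewrite mxtrace_diag rmorph_sum; apply: eq_bigr => i _; by rewrite mxE.
Qed.

Lemma dgR_lin n (c b : R) (a : 'I_n -> R) :
  dgR (fun i => c * a i + b) = c%:C *: dgR a + b%:C *: 1%:M.
Proof.
apply/matrixP => i j; rewrite !mxE.
by case: eqP => _; rewrite /= ?mulr1n ?mulr0n ?mulr1 ?mulr0 ?addr0 ?rmorphD ?rmorphM.
Qed.


Lemma real_C (x : C) : x \is Num.real -> x = (complex.Re x)%:C.
Proof.
case: x => a b; rewrite realE !lecE /= => /orP[] /andP[/eqP hb _];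
  by move: hb => /= hb; rewrite (_ : b = 0) //; apply/eqP; rewrite hb.
Qed.

Lemma herm_SF n (H : 'M[C]_n) : H \is hermsymmx ->
  exists P (a : 'I_n -> R), P \is unitarymx /\ H = adjmx P *m dgR a *m P.
Proof.
move=> Hh.
have Hn : H \is normalmx by exact: hermitian_normalmx.
have hP : H = invmx (spectralmx H) *m diag_mx (spectral_diag H) *m spectralmx H.
  by move/orthomx_spectralP: Hn.
have PU : spectralmx H \is unitarymx by exact: spectral_unitarymx.
have hr : spectral_diag H \is a realmx by exact: hermitian_spectral_diag_real.
exists (spectralmx H), (fun i => complex.Re (spectral_diag H 0 i)); split => //.
have hI : invmx (spectralmx H) = adjmx (spectralmx H) by exact: invmx_unitary.
rewrite {1}hP hI; congr (_ *m diag_mx _ *m _); apply/rowP => i.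
rewrite mxE; apply: real_C.
by move/mxOverP: hr => /(_ 0 i).
Qed.

Lemma conj_lin n (P X : 'M[C]_n) (c d : C) : P \is unitarymx ->
  adjmx P *m (c *: X + d *: 1%:M) *m P = c *: (adjmx P *m X *m P) + d *: 1%:M.
Proof.
move=> PU.
by rewrite mulmxDr mulmxDl -!scalemxAr -!scalemxAl mulmx1 unitary_adjK.
Qed.

Lemma dgR_scale n c (a : 'I_n -> R) : c%:C *: dgR a = dgR (fun i => c * a i).
Proof.
apply/matrixP => i j; rewrite !mxE.
by case: eqP => _; rewrite /= ?mulr1n ?mulr0n ?mulr0 ?rmorphM.
Qed.

Lemma scale_SF n c (P H : 'M[C]_n) (a : 'I_n -> R) : H = adjmx P *m dgR a *m P ->
  c%:C *: H = adjmx P *m dgR (fun i => c * a i) *m P.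
Proof. by move=> ->; rewrite scalemxAl scalemxAr dgR_scale. Qed.

Lemma tr_conj n (P X : 'M[C]_n) : P \is unitarymx -> \tr (adjmx P *m X *m P) = \tr X.
Proof. by move=> PU; rewrite mxtrace_mulC mulmxA unitary_Kadj // mul1mx. Qed.

Lemma sum_gt0 n (F : 'I_n -> R) : (0 < n)%N -> (forall i, 0 < F i) -> 0 < \sum_i F i.
Proof.
case: n F => // n F _ hF; rewrite big_ord_recl.
have h1 := hF ord0.
have h2 : 0 <= \sum_(i < n) F (lift ord0 i) by apply: sumr_ge0 => i _; exact/ltW.
lra.
Qed.

Section Gibbs.
Variables (n : nat) (beta : R) (H P : 'M[C]_n) (a : 'I_n -> R).
Hypothesis PU : P \is unitarymx.
Hypothesis hH : H = adjmx P *m dgR a *m P.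

Lemma mexp_SF : mexp ((- beta)%:C *: H) = adjmx P *m dgR (fun i => expR (- beta * a i)) *m P.
Proof. exact: (funm_SF _ PU (scale_SF _ hH)). Qed.

Lemma partZ_SF : partZ beta H = \sum_i expR (- beta * a i).
Proof. by rewrite /partZ /trR mexp_SF tr_conj // mxtrace_dgR. Qed.

Lemma partZ_gt0 : (0 < n)%N -> 0 < partZ beta H.
Proof. by move=> n0; rewrite partZ_SF; apply: sum_gt0 => // i; exact: expR_gt0. Qed.

Lemma gibbs_SF : gibbs beta H =
  adjmx P *m dgR (fun i => expR (- beta * a i) / partZ beta H) *m P.
Proof.
rewrite /gibbs mexp_SF scalemxAl scalemxAr dgR_scale.
by congr (_ *m dgR _ *m _); apply: funext => i; rewrite mulrC.
Qed.

Lemma tr_gibbs : (0 < n)%N -> \tr (gibbs beta H) = 1.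
Proof.
move=> n0; rewrite gibbs_SF tr_conj // mxtrace_dgR -mulr_suml -partZ_SF mulfV //.
exact/lt0r_neq0/partZ_gt0.
Qed.

Lemma mln_gibbs : (0 < n)%N ->
  mln (gibbs beta H) = (- beta)%:C *: H + (- ln (partZ beta H))%:C *: 1%:M.
Proof.
move=> n0; have Z0 := partZ_gt0 n0.
rewrite /mln (funm_SF _ PU gibbs_SF).
have -> : (fun i => ln (expR (- beta * a i) / partZ beta H)) =
          (fun i => - beta * a i + - ln (partZ beta H)).
  apply: funext => i; rewrite ln_div ?expRK //; rewrite posrE ?expR_gt0 //.
by rewrite dgR_lin conj_lin // -hH.
Qed.

End Gibbs.


Lemma conj_tens n m (P : 'M[C]_n) (Q : 'M[C]_m) (W : 'M[C]_(n * m)) X Y :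
  adjmx ((P *t Q) *m W) *m (X *t Y) *m ((P *t Q) *m W)
  = adjmx W *m ((adjmx P *m X *m P) *t (adjmx Q *m Y *m Q)) *m W.
Proof.
rewrite adjmx_mul adjmx_tens -!mulmxA; congr (_ *m _); by rewrite !mulmxA !tensmx_mul.
Qed.

Lemma mln_tens n m (P : 'M[C]_n) (Q : 'M[C]_m) (W : 'M[C]_(n * m))
  (a : 'I_n -> R) (b : 'I_m -> R) :
  P \is unitarymx -> Q \is unitarymx -> W \is unitarymx ->
  (forall i, 0 < a i) -> (forall j, 0 < b j) ->
  mln (adjmx W *m ((adjmx P *m dgR a *m P) *t (adjmx Q *m dgR b *m Q)) *m W)
  = adjmx W *m ((adjmx P *m dgR (fun i => ln (a i)) *m P) *t 1%:M
       + 1%:M *t (adjmx Q *m dgR (fun j => ln (b j)) *m Q)) *m W.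
Proof.
move=> PU QU WU ha hb.
have PQU : (P *t Q) *m W \is unitarymx.
  by apply: mul_unitarymx => //; apply: tens_unitary.
rewrite -conj_tens dgR_tens /mln (funm_SF _ PQU erefl).
have -> : (fun k => ln (a (@mxtens_unindex _ _ k).1 * b (@mxtens_unindex _ _ k).2)) =
    (fun k => ln (a (@mxtens_unindex _ _ k).1) + ln (b (@mxtens_unindex _ _ k).2)).
  by apply: funext => k; rewrite lnM // posrE.
rewrite (dgR_add_tens (fun i => ln (a i)) (fun j => ln (b j))).
rewrite mulmxDr mulmxDl !conj_tens !mulmx1 !unitary_adjK //.
by rewrite mulmxDr mulmxDl.
Qed.


Lemma tr_ptrB n m (A : 'M[C]_n) (X : 'M[C]_(n * m)) :
  \tr (X *m (A *t 1%:M)) = \tr (A *m ptrB X).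
Proof.
rewrite /mxtrace sum_tens.
have -> : \sum_(i < n) \sum_(j < m) (X *m (A *t 1%:M)) (@mxtens_index _ _ (i, j)) (@mxtens_index _ _ (i, j))
   = \sum_(i < n) \sum_(j < m) \sum_(i' < n) X (@mxtens_index _ _ (i, j)) (@mxtens_index _ _ (i', j)) * A i' i.
  apply: eq_bigr => i _; apply: eq_bigr => j _.
  rewrite mxE sum_tens; apply: eq_bigr => i' _.
  rewrite (bigD1 j) //= tensmxE !mxE eqxx mulr1 big1 ?addr0 // => j' /negbTE hj.
  by rewrite tensmxE !mxE hj ?mulr0n ?mulr0.
rewrite (eq_bigr (fun i => \sum_(i' < n) \sum_(j < m) X (@mxtens_index _ _ (i, j)) (@mxtens_index _ _ (i', j)) * A i' i)); last first.
  by move=> i _; rewrite exchange_big.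
rewrite exchange_big /=; apply: eq_bigr => i _; rewrite mxE.
apply: eq_bigr => i' _; rewrite !mxE mulr_sumr; apply: eq_bigr => j _; by rewrite mulrC.
Qed.


Lemma ReM_C (x : R) (z : C) : complex.Re (x%:C * z) = x * complex.Re z.
Proof. by case: z => a b /=; rewrite mul0r subr0. Qed.

Lemma conj_mul n (P X Y : 'M[C]_n) : P \is unitarymx ->
  (adjmx P *m X *m P) *m (adjmx P *m Y *m P) = adjmx P *m (X *m Y) *m P.
Proof.
by move=> PU; rewrite !mulmxA -(mulmxA _ P) unitary_Kadj // mulmx1.
Qed.

Definition Emx n (e : 'I_n -> 'cV[C]_n) : 'M[C]_n := \matrix_(r, i) e i r 0.

Lemma E_unitary n (e : 'I_n -> 'cV[C]_n) :
  (forall i j, adjmx (e i) *m e j = ((i == j)%:R)%:M) -> adjmx (Emx e) \is unitarymx.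
Proof.
move=> he; apply/unitarymxP; rewrite -/(adjmx _) adjmxK.
apply/matrixP => i j; move/matrixP: (he i j) => /(_ 0 0).
by rewrite !mxE eqxx mulr1n => <-; apply: eq_bigr => r _; rewrite !mxE.
Qed.

Lemma rho_SF n (e : 'I_n -> 'cV[C]_n) (p : 'I_n -> R) :
  \sum_i (p i)%:C *: ketbra (e i) = adjmx (adjmx (Emx e)) *m dgR p *m adjmx (Emx e).
Proof.
rewrite adjmxK; apply/matrixP => r s; rewrite summxE mxE.
apply: eq_bigr => i _; rewrite !mxE big_ord1 !mxE.
by rewrite (bigD1 i) //= !mxE eqxx mulr1n big1 ?addr0 1?mulrCA ?mulrA // => k /negbTE hk; rewrite !mxE hk mulr0n mulr0.
Qed.


Section ThetaS.
Variables (beta : R) (n m : nat) (Ht : 'M[C]_n) (HB : 'M[C]_m) (U : 'M[C]_(n * m))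
  (e : 'I_n -> 'cV[C]_n).
Let w i := expR (- beta * Efin beta Ht HB U e i) / Ztil beta Ht HB U e.

Lemma Theta_eq : Theta beta Ht HB U e =
  U *m ((\sum_i (w i)%:C *: ketbra (e i)) *t gibbs beta HB) *m adjmx U.
Proof.
rewrite /Theta tensmx_suml mulmx_sumr mulmx_suml; apply: eq_bigr => i _.
by rewrite tensmxZl -scalemxAr -scalemxAl.
Qed.

Lemma tr_Theta_Ht : \tr (Theta beta Ht HB U e *m (Ht *t 1%:M)) =
  \sum_i (w i)%:C * \tr (Ht *m Phi beta HB U (ketbra (e i))).
Proof.
rewrite /Theta mulmx_suml raddf_sum; apply: eq_bigr => i _.
rewrite -scalemxAl /= mxtraceZ; by rewrite tr_ptrB.
Qed.

End ThetaS.

End Aux.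

Lemma final_alg (R : realType) n (beta : R) (eps Ef : 'I_n -> R) (Z0 Zt Zs Q D F0 Ft : R) :
  0 < beta -> 0 < Z0 -> 0 < Zt -> 0 < Zs -> Zs = \sum_i expR (- beta * Ef i) ->
  Ft = - beta^-1 * ln Zt -> F0 = - beta^-1 * ln Z0 -> D = ln Zt - ln Zs - beta * Q ->
  \sum_i expR (- beta * eps i) / Z0 * expR (- beta * (Ef i - eps i - Q))
  = expR (- beta * (Ft - F0)) * expR (- D).
Proof.
move=> b0 Z0p Ztp Zsp hZs hFt hF0 hD.
have bne : beta != 0 by exact: lt0r_neq0.
have -> : - beta * (Ft - F0) = ln Zt - ln Z0 by rewrite hFt hF0; field.
rewrite -expRD hD.
have -> : ln Zt - ln Z0 + - (ln Zt - ln Zs - beta * Q) = ln Zs + (beta * Q - ln Z0) by ring.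
rewrite expRD lnK ?posrE // hZs mulr_suml; apply: eq_bigr => i _.
rewrite expRD expRN lnK ?posrE //.
have -> : - beta * (Ef i - eps i - Q) = - beta * Ef i + beta * Q + - (- beta * eps i) by ring.
rewrite !expRD expRN.
have h1 : expR (- beta * eps i) != 0 by rewrite gt_eqF // expR_gt0.
have h2 : Z0 != 0 by rewrite gt_eqF.
rewrite mulrC -mulrA -mulrA; congr (_ * _); by rewrite -mulrA (mulrA (expR (- beta * eps i))^-1) mulVf // mul1r.
Qed.

Unset Implicit Arguments.

Theorem theorem1 (R : realType) (n m : nat) (beta : R)
  (H0 Ht : 'M[R[i]]_n) (HB : 'M[R[i]]_m) (U : 'M[R[i]]_(n * m))
  (e : 'I_n -> 'cV[R[i]]_n) (eps : 'I_n -> R) :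
  (0 < n)%N -> (0 < m)%N -> 0 < beta ->
  H0 \is hermsymmx -> Ht \is hermsymmx -> HB \is hermsymmx ->
  U \is unitarymx ->
  (forall i j : 'I_n, adjmx (e i) *m e j = ((i == j)%:R)%:M) ->
  (forall i : 'I_n, H0 *m e i = (eps i)%:C *: e i) ->
  \sum_(i < n) expR (- beta * eps i) / partZ beta H0 *
      expR (- beta * Wtil beta Ht HB U e eps i)
  = expR (- beta * (freeEnergy beta Ht - freeEnergy beta H0)) *
    expR (- relent (Theta beta Ht HB U e) (tensmx (gibbs beta Ht) (gibbs beta HB))).
Proof.
move=> n0 m0 b0 H0h Hth HBh UU he heps.
have [P0 [a0 [P0U hH0]]] := herm_SF H0h.
have [Pt [aT [PtU hHt]]] := herm_SF Hth.
have [PB [ab [PBU hHB]]] := herm_SF HBh.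
have Z0p := partZ_gt0 beta P0U hH0 n0.
have Ztp := partZ_gt0 beta PtU hHt n0.
have ZBp := partZ_gt0 beta PBU hHB m0.
set Z0 := partZ beta H0 in Z0p *.
set Zt := partZ beta Ht in Ztp *.
set ZB := partZ beta HB in ZBp *.
set Ef := Efin beta Ht HB U e.
set Zs := Ztil beta Ht HB U e.
have Zsp : 0 < Zs by apply: sum_gt0 => // i; exact: expR_gt0.
set p := fun i => expR (- beta * Ef i) / Zs.
have pp : forall i, 0 < p i by move=> i; apply: divr_gt0 => //; exact: expR_gt0.
have psum : \sum_i p i = 1 by rewrite -mulr_suml mulfV //; exact: lt0r_neq0.
set q := fun k => expR (- beta * ab k) / ZB.
have qp : forall k, 0 < q k by move=> k; apply: divr_gt0 => //; exact: expR_gt0.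
have VEU := E_unitary he.
set VE := adjmx (Emx e) in VEU.
have WU : adjmx U \is unitarymx by exact: adj_unitary.
have htB := gibbs_SF beta PBU hHB.
have htt := gibbs_SF beta PtU hHt.
have hTh : Theta beta Ht HB U e = adjmx (adjmx U) *m ((adjmx VE *m dgR p *m VE) *t
    (adjmx PB *m dgR q *m PB)) *m adjmx U.
  by rewrite Theta_eq (rho_SF e p) htB !adjmxK.
have LBe : adjmx PB *m dgR (fun k => ln (q k)) *m PB = mln (gibbs beta HB).
  by rewrite /mln (funm_SF _ PBU htB).
have LTe : adjmx Pt *m dgR (fun k => ln (expR (- beta * aT k) / Zt)) *m Pt
    = mln (gibbs beta Ht).
  by rewrite /mln (funm_SF _ PtU htt).
have lnTh : mln (Theta beta Ht HB U e) = adjmx (adjmx U) *m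
    ((adjmx VE *m dgR (fun i => ln (p i)) *m VE) *t 1%:M
     + 1%:M *t mln (gibbs beta HB)) *m adjmx U.
  by rewrite hTh (mln_tens VEU PBU WU pp qp) LBe.
have ln2 : mln (gibbs beta Ht *t gibbs beta HB) =
    mln (gibbs beta Ht) *t 1%:M + 1%:M *t mln (gibbs beta HB).
  have qtp : forall k, 0 < expR (- beta * aT k) / Zt.
    by move=> k; apply: divr_gt0 => //; exact: expR_gt0.
  have -> : gibbs beta Ht *t gibbs beta HB = adjmx 1%:M *m
    ((adjmx Pt *m dgR (fun k => expR (- beta * aT k) / Zt) *m Pt) *t
     (adjmx PB *m dgR q *m PB)) *m 1%:M.
    by rewrite adjmx1 mul1mx mulmx1 htt htB.
  by rewrite (mln_tens PtU PBU (unitary1 _ _) qtp qp) adjmx1 mul1mx mulmx1 LTe LBe.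
rewrite (mln_gibbs beta PtU hHt n0) (mln_gibbs beta PBU hHB m0) in ln2 lnTh.
set rho := adjmx VE *m dgR p *m VE.
set tB := gibbs beta HB in ln2 lnTh htB *.
have hTh2 : Theta beta Ht HB U e = adjmx (adjmx U) *m (rho *t tB) *m adjmx U.
  by rewrite hTh htB.
have trB : \tr tB = 1 := tr_gibbs beta PBU hHB m0.
have tBe : tB = gibbs beta HB by [].
clearbody tB.
have trrho : \tr rho = 1.
  by rewrite /rho tr_conj // mxtrace_dgR psum.
have trrhoL : \tr (rho *m (adjmx VE *m dgR (fun i => ln (p i)) *m VE)) =
    (\sum_i p i * ln (p i))%:C.
  by rewrite /rho conj_mul // dgR_mul tr_conj // mxtrace_dgR.
have T1 : trR (Theta beta Ht HB U e *m mln (Theta beta Ht HB U e)) =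
    \sum_i p i * ln (p i) - beta * trR (HB *m tB) - ln ZB.
  rewrite lnTh hTh2 conj_mul // /trR tr_conj //.
  rewrite mulmxDr !tensmx_mul !mulmx1 mxtraceD !mxtrace_tens trrhoL trB trrho.
  rewrite mulmxDr -!scalemxAr mulmx1 mxtraceD !mxtraceZ trB mxtrace_mulC -/ZB.
  rewrite !mulr1 !mul1r !raddfD /= ReM_C; lra.
have trTh : \tr (Theta beta Ht HB U e) = 1.
  by rewrite hTh2 tr_conj // mxtrace_tens trrho trB mulr1.
have trTH : complex.Re (\tr (Theta beta Ht HB U e *m (Ht *t 1%:M))) = \sum_i p i * Ef i.
  rewrite tr_Theta_Ht raddf_sum; apply: eq_bigr => i _; exact: ReM_C.
have T2 : trR (Theta beta Ht HB U e *m mln (gibbs beta Ht *t tB)) =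
    - beta * \sum_i p i * Ef i - ln Zt
    - beta * trR ((1%:M *t HB) *m Theta beta Ht HB U e) - ln ZB.
  rewrite ln2 !tensmxDl !tensmxDr !tensmxZl !tensmxZr !tens11.
  rewrite !mulmxDr -!scalemxAr !mulmx1 /trR !mxtraceD !mxtraceZ trTh.
  rewrite (mxtrace_mulC _ (1%:M *t HB)) !raddfD /= !ReM_C trTH -/Zt -/ZB.
  rewrite !mulr1; lra.
have hpl : \sum_i p i * ln (p i) = - beta * \sum_i p i * Ef i - ln Zs.
  rewrite (eq_bigr (fun i => - beta * (p i * Ef i) - p i * ln Zs)); last first.
    move=> i _; rewrite /p ln_div ?expRK ?posrE ?expR_gt0 //.
    rewrite -/p; ring.
  by rewrite sumrB -mulr_sumr -mulr_suml psum mul1r.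
have hD : relent (Theta beta Ht HB U e) (gibbs beta Ht *t tB) =
    ln Zt - ln Zs - beta * Qtil beta Ht HB U e.
  rewrite /relent T1 T2 hpl /Qtil -tBe; lra.
exact: (@final_alg R n beta eps Ef _ _ _ _ _ _ _ b0 Z0p Ztp Zsp erefl erefl erefl hD).
Qed.
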